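(* Let $c_1 > 0$ be a real number, let $k \ge 2$ be an integer, and let $G$ be a finite simple graph with $\mathrm{mad}(G) < c_1 + k$. Then there exists a partition $V(G) = A \uplus B$ such that $\mathrm{mad}(G[A]) < c_1$ and $\mathrm{mad}(G[B]) < 2k - 2$.
   Context: $\mathrm{mad}(G) := \max_{H \subseteq G,\, V(H)\neq\emptyset} \frac{2|E(H)|}{|V(H)|}$ (maximum average degree over nonempty subgraphs); by convention the graph with empty vertex set has $\mathrm{mad} = -\infty$. *)

(* Defs.v *)
From HB Require Import structures.
From mathcomp Require Import all_boot all_order all_algebra.
Set Implicit Arguments. Unset Strict Implicit. Unset Printing Implicit Defensive.
Import Order.TTheory GRing.Theory Num.Theory.

(* A finite simple graph is a symmetric irreflexive relation e on a finType T.
   Edges are unordered pairs {x,y} (2-element sets). *)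
Definition simple_graph (T : finType) (e : rel T) : Prop :=
  symmetric e /\ irreflexive e.

Definition edges_in (T : finType) (e : rel T) (S : {set T}) : {set {set T}} :=
  [set E : {set T} | [exists x in S, exists y in S, e x y && (E == [set x; y])]].

Definition subgraph_of (T : finType) (e : rel T) (D S : {set T})
  (F : {set {set T}}) : bool :=
  (S \subset D) && (F \subset edges_in e S).

(* mad(G[D]) < c, i.e. max over nonempty subgraphs H of G[D] of
   2|E(H)|/|V(H)| is < c (vacuous when D is empty: mad = -infinity). *)
Definition mad_lt (R : realFieldType) (T : finType) (e : rel T)
  (D : {set T}) (c : R) : Prop :=
  forall (S : {set T}) (F : {set {set T}}),
    subgraph_of e D S F -> S != set0 ->
    ((2 * #|F|)%:R / (#|S|)%:R < c)%R.

(* Main.v *)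
Require Import Defs.
From HB Require Import structures.
From mathcomp Require Import all_boot all_order all_algebra.
From mathcomp Require Import zify lra.
Set Implicit Arguments. Unset Strict Implicit. Unset Printing Implicit Defensive.


Section Comb.
Variable T : finType.

Definition DG (g : T -> T -> nat) (X : {set T}) := \sum_(a in X) \sum_(b in X) g a b.

Lemma DG_D1 g (X : {set T}) v : v \in X -> (forall a b, g a b = g b a) -> g v v = 0 ->
  DG g X = DG g (X :\ v) + 2 * \sum_(b in X :\ v) g v b.
Proof.
move=> vX gs g0; rewrite /DG.
rewrite (eq_bigr (fun a => g a v + \sum_(b in X :\ v) g a b)); last first.
  by move=> a _; rewrite (big_setD1 v vX).
rewrite (big_setD1 v vX) /= g0 add0n big_split /=.
rewrite (eq_bigr (fun a => g v a) (P := fun a => a \in X :\ v) (r := index_enum T) (F1 := fun a => g a v)); last by move=> a _; rewrite gs.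
lia.
Qed.

Lemma DG0 g : DG g set0 = 0.
Proof. by rewrite /DG big_set0. Qed.

Lemma DG_even g (X : {set T}) : (forall a b, g a b = g b a) -> (forall a, g a a = 0) -> ~~ odd (DG g X).
Proof.
move=> gs g0; elim: {X}#|X| {-2}X (erefl #|X|) => [|n IH] X cX.
  by move/eqP: cX; rewrite cards_eq0 => /eqP ->; rewrite DG0.
have [v vX] : exists v, v \in X.
  by apply/set0Pn; rewrite -card_gt0 cX.
rewrite (DG_D1 vX gs (g0 v)) oddD mul2n odd_double addbF; apply: IH.
by move: cX; rewrite (cardsD1 v X) vX; case.
Qed.

End Comb.


Section Hak.
Variable T : finType.
Implicit Types (m g : T -> T -> nat) (c : T -> nat) (S : {set T}).

Definition cs c S := \sum_(a in S) c a.

Lemma DG_ind g S : DG g S = \sum_a \sum_b ((a \in S) * (b \in S) * g a b).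
Proof.
rewrite /DG big_mkcond; apply: eq_bigr => a _ /=.
rewrite big_mkcond /=; case: (a \in S) => /=.
  by apply: eq_bigr => b _; case: (b \in S); rewrite ?mul1n ?mul0n.
by rewrite big1 // => b _; rewrite mul0n.
Qed.

Lemma cs_ind c S : cs c S = \sum_a ((a \in S) * c a).
Proof.
by rewrite /cs big_mkcond; apply: eq_bigr => a _; case: (a \in S); rewrite ?mul1n ?mul0n.
Qed.

Lemma sum1_pick (F : T -> nat) u : \sum_a (F a * (a == u)) = F u.
Proof.
rewrite (bigD1 u) //= eqxx muln1 big1 ?addn0 // => a /negbTE ->; by rewrite muln0.
Qed.

Lemma sum2_pick (F : T -> T -> nat) u v :
  \sum_a \sum_b (F a b * ((a == u) && (b == v))) = F u v.
Proof.
rewrite (eq_bigr (fun a => (\sum_b (F a b * (b == v))) * (a == u))); last first.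
  move=> a _; rewrite big_distrl /=; apply: eq_bigr => b _.
  by case: (a == u); case: (b == v); rewrite /= ?muln0 ?muln1.
by rewrite sum1_pick sum1_pick.
Qed.

Lemma sum2_ge (F : T -> T -> nat) u v : F u v <= \sum_a \sum_b F a b.
Proof.
rewrite (bigD1 u) //= (bigD1 v) //=; lia.
Qed.

Lemma sum2_lt (F G : T -> T -> nat) u v :
  (forall a b, F a b <= G a b) -> F u v < G u v ->
  \sum_a \sum_b F a b < \sum_a \sum_b G a b.
Proof.
move=> le lt; rewrite (bigD1 u) //= [X in _ < X](bigD1 u) //=.
rewrite (bigD1 v) //= [X in _ < X + _](bigD1 v) //=.
have h1 : \sum_(i | i != v) F u i <= \sum_(i | i != v) G u i by apply: leq_sum.
have h2 : \sum_(i | i != u) \sum_b F i b <= \sum_(i | i != u) \sum_b G i b.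
  by apply: leq_sum => i _; apply: leq_sum.
lia.
Qed.

Lemma DG_submod g S S' :
  DG g (S :|: S') + DG g (S :&: S') =
  DG g S + DG g S' + \sum_a \sum_b ((a \in S :\: S') * (b \in S' :\: S) * g a b)
    + \sum_a \sum_b ((a \in S' :\: S) * (b \in S :\: S') * g a b).
Proof.
rewrite !DG_ind -!big_split; apply: eq_bigr => a _ /=; rewrite -!big_split.
apply: eq_bigr => b _ /=; rewrite !inE.
case: (a \in S); case: (a \in S'); case: (b \in S); case: (b \in S') => /=; lia.
Qed.

Lemma cs_mod c S S' : cs c (S :|: S') + cs c (S :&: S') = cs c S + cs c S'.
Proof.
rewrite !cs_ind -!big_split; apply: eq_bigr => a _ /=; rewrite !inE.
case: (a \in S); case: (a \in S') => /=; lia.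
Qed.

Definition hyp m c := forall S, DG m S <= 2 * cs c S.
Definition concl m c := exists y : T -> T -> nat,
  (forall a b, y a b + y b a = m a b) /\ (forall a, \sum_b y a b <= c a).
Definition symm m := forall a b, m a b = m b a.
Definition diag0 m := forall a, m a a = 0.

Lemma orient_step m c u v n :
  (forall m' c', \sum_a \sum_b m' a b <= n -> symm m' -> diag0 m' -> hyp m' c' -> concl m' c') ->
  \sum_a \sum_b m a b <= n.+1 -> symm m -> diag0 m -> hyp m c -> 0 < m u v ->
  (forall S, u \in S -> v \notin S -> DG m S != 2 * cs c S) -> concl m c.
Proof.
move=> IH tot ms m0 hm muv notight.
have uv : u != v by apply/eqP => e; move: muv; rewrite e m0.
have vu : v != u by rewrite eq_sym.
have cu : 0 < c u.
  have := notight [set u]; rewrite set11 inE vu /DG /cs !big_set1 m0 => /(_ isT isT).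
  by case: (c u).
pose m1 a b := m a b - ((a == u) && (b == v)) - ((a == v) && (b == u)).
have m1E : forall a b, m1 a b + ((a == u) && (b == v)) + ((a == v) && (b == u)) = m a b.
  move=> a b; rewrite /m1.
  case: (eqVneq a u) => [->|au]; case: (eqVneq b v) => [->|bv] /=; rewrite ?eqxx ?(negbTE uv) ?(negbTE vu) /=.
  - lia.
  - case: (eqVneq b u) => [->|]; rewrite /= ?andbF ?andbT ?m0; lia.
  - case: (eqVneq a v) => [->|]; rewrite /= ?andbF ?andbT; lia.
  - case: (eqVneq a v) => [->|av]; case: (eqVneq b u) => [->|bu] /=; rewrite ?(ms v u); lia.
pose c1 a := c a - (a == u).
have c1E : forall a, c1 a + (a == u) = c a.
  by move=> a; rewrite /c1; case: (eqVneq a u) => [->|] /=; lia.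
have [y [ys yl]] : concl m1 c1.
  apply: IH.
  - rewrite -ltnS; apply: leq_trans tot; apply: (sum2_lt (u := u) (v := v)).
      by move=> a b; rewrite -(m1E a b); lia.
    by rewrite -(m1E u v) !eqxx /=; lia.
  - move=> a b; have := m1E a b; have := m1E b a; rewrite (ms b a).
    case: (a == u); case: (b == v); case: (a == v); case: (b == u) => /=; lia.
  - by move=> a; have := m1E a a; rewrite m0; lia.
  - move=> S.
    have e1 : DG m1 S + 2 * ((u \in S) && (v \in S)) = DG m S.
      rewrite !DG_ind.
      have -> : 2 * ((u \in S) && (v \in S)) = \sum_a \sum_b ((a \in S) * (b \in S) * ((a == u) && (b == v)))
                + \sum_a \sum_b ((a \in S) * (b \in S) * ((a == v) && (b == u))).
        rewrite (sum2_pick (fun a b => (a \in S) * (b \in S))) (sum2_pick (fun a b => (a \in S) * (b \in S))).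
        by case: (u \in S); case: (v \in S).
      rewrite -!big_split; apply: eq_bigr => a _; rewrite -!big_split; apply: eq_bigr => b _ /=.
      by rewrite -(m1E a b); lia.
    have e2 : cs c1 S + (u \in S) = cs c S.
      rewrite !cs_ind -(sum1_pick (fun a => nat_of_bool (a \in S)) u) -big_split.
      by apply: eq_bigr => a _ /=; rewrite -(c1E a); lia.
    have hS := hm S.
    case uS: (u \in S); case vS: (v \in S); rewrite ?uS ?vS /= in e1 e2; try lia.
    have nt := notight S uS (negbT vS).
    have ev : ~~ odd (DG m S) by apply: DG_even.
    have := odd_double_half (DG m S); rewrite (negbTE ev) add0n => hh.
    move/eqP: nt => nt; lia.
exists (fun a b => y a b + ((a == u) && (b == v))); split.
  move=> a b; rewrite -(m1E a b) -ys.
  by case: (a == u); case: (b == v); case: (a == v); case: (b == u) => /=; lia.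
move=> a; rewrite big_split /=.
have -> : \sum_b ((a == u) && (b == v)) = (a == u).
  case: (a == u) => /=; last by rewrite big1.
  by rewrite (bigD1 v) //= eqxx big1 // => b /negbTE ->.
by rewrite -(c1E a); have := yl a; lia.
Qed.

Lemma hakimi n m c : \sum_a \sum_b m a b <= n -> symm m -> diag0 m -> hyp m c -> concl m c.
Proof.
elim: n m c => [|n IH] m c tot ms m0 hm.
  exists (fun _ _ => 0); split => [a b|a]; last by rewrite big1.
  by apply/esym; have := sum2_ge m a b; lia.
case: (boolP [exists a, exists b, 0 < m a b]); last first.
  rewrite negb_exists => /forallP H.
  exists (fun _ _ => 0); split => [a b|a]; last by rewrite big1.
  by have := H a; rewrite negb_exists => /forallP /(_ b); lia.
case/existsP => u /existsP [v muv].
case: (boolP [exists S : {set T}, [&& u \in S, v \notin S & DG m S == 2 * cs c S]]) => [/existsP [S /and3P [uS vS tS]]|nt]; last first.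
  apply: (orient_step (u := u) (v := v) IH) => // S uS vS; apply/negP => tS.
  by move: nt; rewrite negb_exists => /forallP /(_ S); rewrite uS vS tS.
case: (boolP [exists S' : {set T}, [&& v \in S', u \notin S' & DG m S' == 2 * cs c S']]) => [/existsP [S' /and3P [vS' uS' tS']]|nt]; last first.
  apply: (orient_step (u := v) (v := u) IH) => //; first by rewrite ms.
  move=> S1 uS1 vS1; apply/negP => tS1.
  by move: nt; rewrite negb_exists => /forallP /(_ S1); rewrite uS1 vS1 tS1.
have sm := DG_submod m S S'.
have cm := cs_mod c S S'.
have X1 : m u v <= \sum_a \sum_b ((a \in S :\: S') * (b \in S' :\: S) * m a b).
  apply: leq_trans (sum2_ge _ u v); by rewrite !inE uS vS' (negbTE vS) (negbTE uS') /= !mul1n.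
have h1 := hm (S :|: S'); have h2 := hm (S :&: S').
move/eqP: tS => tS; move/eqP: tS' => tS'.
lia.
Qed.

End Hak.


Section Acyc.
Variable T : finType.
Variable e : rel T.
Variables N0 E0 : nat.

Definition valid (y : T -> T -> nat) :=
  (forall a b, y a b + y b a = 2 * N0 * e a b) /\ (forall a, \sum_b y a b <= E0).

Definition Phi (y : T -> T -> nat) := \sum_a \sum_b ((y a b - N0) + (N0 - y a b)).

Lemma push y (X : {set T}) : valid y -> X != set0 ->
  (forall v, v \in X -> exists u, [/\ u \in X, e v u & y v u < N0]) ->
  exists y', valid y' /\ Phi y' < Phi y.
Proof.
move=> [ys yl] Xn0 H.
pose s v := odflt v [pick u in X | e v u && (y v u < N0)].
have sP : forall v, v \in X -> [/\ s v \in X, e v (s v) & y v (s v) < N0].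
  move=> v vX; rewrite /s; case: pickP => [u /andP [uX /andP [evu lt]]|none] /=.
    by [].
  have [u [uX evu lt]] := H v vX; have := none u; by rewrite uX evu lt.
have sgt : forall v, v \in X -> N0 < y (s v) v.
  move=> v vX; have [_ evs lt] := sP v vX; have := ys v (s v); rewrite evs; lia.
pose Pc (C : {set T}) := [&& C \subset X, C != set0 & s @: C \subset C].
have PX : Pc X.
  rewrite /Pc subxx Xn0 /=; apply/subsetP => x /imsetP [v vX ->]; by have [] := sP v vX.
case: (arg_minnP (fun C : {set T} => #|C|) PX) => C /and3P [CX Cn0 sC] Cmin.
have sCeq : s @: C = C.
  apply/eqP; rewrite eqEcard sC /=; apply: Cmin.
  rewrite /Pc (subset_trans sC CX) imset_eq0 Cn0 /=; exact: imsetS.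
have sinj : {in C &, injective s}.
  by apply/imset_injP; rewrite sCeq.
have CXv : forall v, v \in C -> v \in X by move=> v; apply: (subsetP CX).
pose I2 a b := (a \in C) && (b == s a).
pose I1 a b := (b \in C) && (a == s b).
have I1gt : forall a b, I1 a b -> N0 < y a b.
  by move=> a b /andP [bC /eqP ->]; apply: sgt; apply: CXv.
have I2lt : forall a b, I2 a b -> y a b < N0.
  by move=> a b /andP [aC /eqP ->]; have [] := sP a (CXv a aC).
have I12 : forall a b, I1 a b = I2 b a by [].
have sumI1 : forall a, \sum_b I1 a b = (a \in C).
  move=> a; case aC: (a \in C).
    have : a \in s @: C by rewrite sCeq.
    case/imsetP => b0 b0C ab0.
    rewrite (bigD1 b0) //= big1 => [|b bb0]; first by rewrite /I1 b0C ab0 eqxx.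
    rewrite /I1; case bC: (b \in C) => //=; case: eqP => //= abs.
    by exfalso; move/eqP: bb0; apply; apply: sinj => //; rewrite -abs -ab0.
  rewrite big1 // => b _; rewrite /I1; case bC: (b \in C) => //=.
  case: eqP => //= abs; exfalso; move: aC; rewrite abs -sCeq.
  by move/negbT/negP; apply; apply: imset_f.
have sumI2 : forall a, \sum_b I2 a b = (a \in C).
  move=> a; rewrite /I2; case aC: (a \in C) => /=; last by rewrite big1.
  by rewrite (bigD1 (s a)) //= eqxx big1 // => b /negbTE ->.
pose y' a b := y a b + I2 a b - I1 a b.
have y'E : forall a b, y' a b + I1 a b = y a b + I2 a b.
  move=> a b; rewrite /y'; case h1: (I1 a b); case h2: (I2 a b) => /=.
  - by have := I1gt a b h1; have := I2lt a b h2; lia.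
  - by have := I1gt a b h1; lia.
  - lia.
  - lia.
exists y'; split; first split.
- move=> a b; have := y'E a b; have := y'E b a; rewrite !I12 -(ys a b).
  case h1: (I2 b a); case h2: (I2 a b) => /=.
  - have := I2lt a b h2; have := I1gt a b; rewrite I12 h1 => /(_ isT); lia.
  - lia.
  - lia.
  - lia.
- move=> a; have : \sum_b y' a b + \sum_b I1 a b = \sum_b y a b + \sum_b I2 a b.
    by rewrite -!big_split; apply: eq_bigr => b _; exact: y'E.
  rewrite sumI1 sumI2 => h; have := yl a; lia.
have [v0 v0C] : exists v0, v0 \in C by apply/set0Pn.
apply: (sum2_lt (u := s v0) (v := v0)).
  move=> a b; have := y'E a b; case h1: (I1 a b); case h2: (I2 a b) => /=.
  - by have := I1gt a b h1; have := I2lt a b h2; lia.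
  - by have := I1gt a b h1; lia.
  - by have := I2lt a b h2; lia.
  - lia.
have h1 : I1 (s v0) v0 by rewrite /I1 v0C eqxx.
have := y'E (s v0) v0; have := I1gt _ _ h1; rewrite h1.
case h2: (I2 (s v0) v0) => /=; last lia.
by have := I2lt _ _ h2; lia.
Qed.

Definition srcb (y : T -> T -> nat) :=
  [forall X : {set T}, (X != set0) ==> [exists v in X, [forall u in X, e v u ==> (N0 <= y v u)]]].

Lemma acyc n y : Phi y <= n -> valid y -> exists y', valid y' /\ srcb y'.
Proof.
elim: n y => [|n IH] y hP vy;
  (case sy: (srcb y); first by exists y);
  (move/negbT: sy; rewrite negb_forall => /existsP [X]);
  (rewrite negb_imply => /andP [Xn0 /existsPn nov]);
  (have [y' [vy' lt]] : exists y', valid y' /\ Phi y' < Phi y;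
   [ apply: (push vy Xn0) => v vX;
     move: (nov v); rewrite vX /= negb_forall => /existsP [u]; rewrite negb_imply => /andP [uX];
     rewrite negb_imply -ltnNge => /andP [evu lt']; by exists u | ]).
  lia.
apply: (IH y') => //; lia.
Qed.

End Acyc.


Section Greedy.
Variable T : finType.
Variable e : rel T.
Hypothesis esym : symmetric e.
Hypothesis eirr : irreflexive e.

Definition De (X : {set T}) := DG (fun a b => nat_of_bool (e a b)) X.

Lemma sum_sub (A B : {set T}) (F : T -> nat) : A \subset B -> \sum_(i in A) F i <= \sum_(i in B) F i.
Proof.
move=> sAB; rewrite [X in X <= _]big_mkcond [X in _ <= X]big_mkcond; apply: leq_sum => i _.
case iA: (i \in A) => //; by rewrite (subsetP sAB i iA).
Qed.

Lemma sum_card (A : {set T}) (P : pred T) : \sum_(b in A) nat_of_bool (P b) = #|[set b in A | P b]|.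
Proof.
rewrite -sum1_card [LHS]big_mkcond [RHS]big_mkcond; apply: eq_bigr => b _; rewrite !inE.
by case: (b \in A); case: (P b).
Qed.

Lemma De_D1 (X : {set T}) v : v \in X -> De X = De (X :\ v) + 2 * \sum_(b in X :\ v) nat_of_bool (e v b).
Proof.
move=> vX; apply: DG_D1 => //; first by move=> a b; rewrite esym.
by rewrite eirr.
Qed.

Lemma edges_D1 (S : {set T}) v : v \in S ->
  edges_in e S = edges_in e (S :\ v) :|: [set [set v; b] | b in [set b in S :\ v | e v b]].
Proof.
move=> vS; apply/setP => E; rewrite !inE.
apply/idP/idP.
  case/existsP => x /andP [xS /existsP [y /andP [yS /andP [exy /eqP EE]]]].
  case: (eqVneq x v) => [xv|xv].
    apply/orP; right; apply/imsetP; exists y; last by rewrite EE xv.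
    rewrite !inE yS andbT -xv exy andbT; apply/eqP => yx; by rewrite yx eirr in exy.
  case: (eqVneq y v) => [yv|yv].
    apply/orP; right; apply/imsetP; exists x; last by rewrite EE yv setUC.
    by rewrite !inE xS xv -yv esym exy.
  apply/orP; left; apply/existsP; exists x; rewrite !inE xv xS /=.
  by apply/existsP; exists y; rewrite !inE yv yS exy EE eqxx.
case/orP.
  case/existsP => x /andP [xS /existsP [y /andP [yS /andP [exy /eqP EE]]]].
  move: xS yS; rewrite !inE => /andP [_ xS] /andP [_ yS].
  by apply/existsP; exists x; rewrite xS; apply/existsP; exists y; rewrite yS exy EE eqxx.
case/imsetP => b; rewrite !inE => /andP [/andP [_ bS] evb] ->.
by apply/existsP; exists v; rewrite vS; apply/existsP; exists b; rewrite bS evb eqxx.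
Qed.

Lemma edges_card (S : {set T}) : 2 * #|edges_in e S| = De S.
Proof.
elim: {S}#|S| {-2}S (erefl #|S|) => [|n IH] S cS.
  move/eqP: cS; rewrite cards_eq0 => /eqP ->.
  rewrite /De DG0; apply/eqP; rewrite muln_eq0 /= cards_eq0; apply/eqP/setP => E.
  rewrite !inE; apply/negbTE; rewrite negb_exists; apply/forallP => x; by rewrite inE.
have [v vS] : exists v, v \in S by apply/set0Pn; rewrite -card_gt0 cS.
rewrite (De_D1 vS) -IH; last by move: cS; rewrite (cardsD1 v S) vS; case.
rewrite (edges_D1 vS) cardsU.
have -> : edges_in e (S :\ v) :&: [set [set v; b] | b in [set b in S :\ v | e v b]] = set0.
  apply/setP => E; rewrite !inE; apply/negbTE/negP => /andP [/existsP [x /andP [xS /existsP [y /andP [yS /andP [_ /eqP EE]]]]]].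
  case/imsetP => b _ Eb; move: xS yS; rewrite !inE => /andP [xv _] /andP [yv _].
  have : v \in E by rewrite Eb set21.
  by rewrite EE !inE ![v == _]eq_sym (negbTE xv) (negbTE yv).
rewrite cards0 subn0 card_in_imset; last first.
  move=> b b'; rewrite !inE => /andP [/andP [bv _] _] _ vb.
  have : b \in [set v; b'] by rewrite -vb set22.
  rewrite !inE => /orP [/eqP bv'|/eqP -> //].
  by move: bv; rewrite bv' eqxx.
by rewrite sum_card mulnDr.
Qed.

Variables (N0 k : nat) (y : T -> T -> nat).
Hypothesis k2 : 2 <= k.
Hypothesis src : srcb e N0 y.

Definition goodA (A B : {set T}) :=
  forall a, a \in A -> k <= \sum_(b in B) nat_of_bool (e a b && (N0 <= y a b)).
Definition goodB (B : {set T}) :=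
  forall S : {set T}, S \subset B -> S != set0 -> De S < (2 * k - 2) * #|S|.

Lemma greedy (X : {set T}) : exists A B : {set T},
  [/\ A :|: B = X, A :&: B = set0, goodA A B & goodB B].
Proof.
elim: {X}#|X| {-2}X (erefl #|X|) => [|n IH] X cX.
  move/eqP: cX; rewrite cards_eq0 => /eqP ->.
  exists set0, set0; split; rewrite ?setU0 ?setI0 //.
    by move=> a; rewrite inE.
  by move=> S; rewrite subset0 => ->.
have Xn0 : X != set0 by rewrite -card_gt0 cX.
move/forallP: src => /(_ X); rewrite Xn0 /= => /existsP [v /andP [vX /forallP vsrc]].
have [A' [B' [UAB IAB gA gB]]] := IH (X :\ v) (ltac:(by move: cX; rewrite (cardsD1 v X) vX; case)).
have vA' : v \notin A'.
  by apply/negP => vA; have : v \in X :\ v; [rewrite -UAB inE vA | rewrite !inE eqxx].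
have vB' : v \notin B'.
  by apply/negP => vB; have : v \in X :\ v; [rewrite -UAB inE vB orbT | rewrite !inE eqxx].
case: (ltnP (\sum_(b in B') nat_of_bool (e v b)) k) => dk.
  exists A', (v |: B'); split.
  - by rewrite setUCA UAB setD1K.
  - by rewrite setIUr IAB setU0; apply/setP => x; rewrite !inE; apply/negbTE/andP => [[xA /eqP xv]]; move: vA'; rewrite -xv xA.
  - move=> a aA; apply: leq_trans (gA a aA) _; apply: sum_sub; exact: subsetUr.
  - move=> S SB Sn0; case vS: (v \in S); last first.
      apply: gB Sn0; apply/subsetP => x xS; move: (subsetP SB x xS); rewrite !inE.
      by case/orP => // /eqP xv; move: vS; rewrite -xv xS.
    have Ssub : S :\ v \subset B'.
      apply/subsetP => x; rewrite !inE => /andP [xv xS]; move: (subsetP SB x xS).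
      by rewrite !inE (negbTE xv).
    have hdeg : \sum_(b in S :\ v) nat_of_bool (e v b) <= k - 1.
      by have := sum_sub (fun b => nat_of_bool (e v b)) Ssub; lia.
    rewrite (De_D1 vS) (cardsD1 v S) vS.
    case: (eqVneq (S :\ v) set0) => [S0|Sn0'].
      by rewrite S0 /De DG0 cards0; move: hdeg; rewrite S0 big_set0; lia.
    have := gB _ Ssub Sn0'; lia.
exists (v |: A'), B'; split.
- by rewrite -setUA UAB setD1K.
- by rewrite setIUl IAB setU0; apply/setP => x; rewrite !inE; apply/negbTE/andP => [[/eqP xv xB]]; move: vB'; rewrite -xv xB.
- move=> a; rewrite !inE => /orP [/eqP ->|aA]; last exact: gA.
  apply: leq_trans dk _; rewrite [X in X <= _]big_mkcond [X in _ <= X]big_mkcond; apply: leq_sum => b _.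
  case bB: (b \in B') => //=; case evb: (e v b) => //=.
  have : b \in X :\ v by rewrite -UAB inE bB orbT.
  rewrite !inE => /andP [_ bX].
  by move: (vsrc b); rewrite bX evb /= => ->.
- exact: gB.
Qed.

End Greedy.

Unset Implicit Arguments.
Import Order.TTheory GRing.Theory Num.Theory.

Theorem mainTheorem13 (R : realFieldType) (c1 : R) (k : nat)
  (T : finType) (e : rel T) :
  (0 < c1)%R -> (2 <= k)%N -> simple_graph e ->
  mad_lt e [set: T] (c1 + k%:R : R)%R ->
  exists A B : {set T},
    [/\ [disjoint A & B], A :|: B = [set: T],
        mad_lt e A c1 & mad_lt e B (2 * k%:R - 2 : R)%R].
Proof.
move=> c1pos k2 [esym eirr] hmad.
case: (boolP ([set: T] == set0)) => [/eqP T0|Tn0].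
  exists set0, set0; split; rewrite ?setU0 ?T0 //.
  - by rewrite -setI_eq0 setI0.
  - by move=> S F /andP [S0 _]; rewrite subset0 in S0; rewrite (eqP S0) eqxx.
  - by move=> S F /andP [S0 _]; rewrite subset0 in S0; rewrite (eqP S0) eqxx.
pose F0 (S : {set T}) : R := ((De e S)%:R / (#|S|)%:R)%R.
have [S0 S0n0 S0max] := @Order.TotalTheory.arg_maxP _ R _ setT (fun S : {set T} => S != set0) F0 Tn0.
set N0 := #|S0|; set E0 := De e S0.
have N0pos : 0 < N0 by rewrite card_gt0.
have dens : forall S : {set T}, N0 * De e S <= E0 * #|S|.
  move=> S; case: (eqVneq S set0) => [->|Sn0]; first by rewrite /De DG0 muln0.
  have h0 : (F0 S <= F0 S0)%R := S0max S Sn0; move: h0; rewrite /F0.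
  have Sp : (0 < (#|S|)%:R :> R)%R by rewrite ltr0n card_gt0.
  have Np : (0 < N0%:R :> R)%R by rewrite ltr0n.
  rewrite ler_pdivrMr // mulrAC ler_pdivlMr // -!natrM ler_nat; lia.
pose m := fun a b : T => 2 * N0 * e a b.
have DGm : forall S, DG m S = 2 * N0 * De e S.
  by move=> S; rewrite /De /DG big_distrr; apply: eq_bigr => a _; rewrite big_distrr.
have [y [ys yl]] : concl m (fun _ => E0).
  apply: (hakimi (n := \sum_a \sum_b m a b)) => //.
  - by move=> a b; rewrite /m esym.
  - by move=> a; rewrite /m eirr muln0.
  - move=> S; rewrite DGm /cs sum_nat_const; have := dens S; lia.
have [y' [[ys' yl'] src]] := acyc (n := Phi N0 y) (leqnn _) (conj ys yl : valid e N0 E0 y).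
have [A [B [UAB IAB gA gB]]] := greedy esym eirr k2 src [set: T].
exists A, B; split => //.
- by rewrite -setI_eq0 IAB.
- move=> S F /andP [SA FS] Sn0.
  have dSB : [disjoint S & B].
    by rewrite -setI_eq0 -subset0 -IAB; apply: setSI.
  have hsum : \sum_(a in S) \sum_(b in S) y' a b = N0 * De e S.
    apply/eqP; rewrite -(eqn_pmul2l (isT : 0 < 2)).
    rewrite mulnA -DGm /DG mul2n -addnn {2}exchange_big -big_split /=; apply/eqP.
    apply: eq_bigr => a _; rewrite -big_split; apply: eq_bigr => b _; exact: ys'.
  have ha : forall a, a \in S -> \sum_(b in S) y' a b + N0 * k <= E0.
    move=> a aS; apply: leq_trans (yl' a).
    have hB : N0 * k <= \sum_(b in B) y' a b.
      have g := gA _ (subsetP SA a aS).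
      apply: leq_trans (leq_mul (leqnn N0) g) _.
      rewrite big_distrr; apply: leq_sum => b _.
      by case: (e a b); case: (leqP N0 (y' a b)) => //= h; rewrite /= ?muln1 ?muln0.
    have : \sum_(b in S) y' a b + \sum_(b in B) y' a b <= \sum_b y' a b.
      rewrite -bigU //=; rewrite [X in X <= _]big_mkcond /=; apply: leq_sum => b _.
      by case: (_ \in _).
    lia.
  have key : N0 * De e S + #|S| * (N0 * k) <= #|S| * E0.
    rewrite -hsum -sum_nat_const -sum_nat_const -big_split /=; apply: leq_sum => a aS.
    exact: ha.
  have hS0 := hmad S0 (edges_in e S0).
  have : subgraph_of e [set: T] S0 (edges_in e S0) by rewrite /subgraph_of subsetT subxx.
  move/hS0 => /(_ S0n0); rewrite edges_card // -/E0 => hE.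
  have Np : (0 < N0%:R :> R)%R by rewrite ltr0n.
  have Sp : (0 < (#|S|)%:R :> R)%R by rewrite ltr0n card_gt0.
  rewrite ltr_pdivrMr // in hE.
  rewrite ltr_pdivrMr //.
  have hF : 2 * #|F| <= De e S.
    by rewrite -edges_card //; rewrite leq_pmul2l //; apply: subset_leq_card.
  have hF' : ((2 * #|F|)%:R <= (De e S)%:R :> R)%R by rewrite ler_nat.
  have key' : ((N0 * De e S + #|S| * (N0 * k))%:R <= (#|S| * E0)%:R :> R)%R by rewrite ler_nat.
  rewrite !natrD !natrM in key'.
  nra.
- move=> S F /andP [SB FS] Sn0.
  have := gB _ SB Sn0.
  have hF : 2 * #|F| <= De e S.
    by rewrite -edges_card //; rewrite leq_pmul2l //; apply: subset_leq_card.
  move=> hB.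
  have Sp : (0 < (#|S|)%:R :> R)%R by rewrite ltr0n card_gt0.
  rewrite ltr_pdivrMr //.
  have : ((2 * #|F|)%:R < ((2 * k - 2) * #|S|)%:R :> R)%R by rewrite ltr_nat; lia.
  have eq2 : (((2 * k - 2) * #|S|)%:R = (2 * k%:R - 2) * (#|S|)%:R :> R)%R.
    rewrite natrM natrB; last lia.
    by rewrite natrM.
  by rewrite eq2 natrM.
Qed.
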